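(* Let $\Omega\subset\mathbb{R}^N$ be a uniformly smooth domain with outer unit normal $\nu$. Let $v_1\in W^{1,\infty}(\Omega\times\mathbb{R})$ and $v_2\in C^1(\overline\Omega\times\mathbb{R})$ satisfy: $v_1\le v_2$ on $\partial\Omega\times\mathbb{R}$; the spatial gradient $\nabla v_2$ is uniformly continuous on $\overline\Omega\times\mathbb{R}$; $$\sup_{\partial\Omega\times\mathbb{R}}\big(v_1-v_2+\min(\partial_\nu v_2,0)\big)<0;$$ and for every $\varepsilon>0$, $\inf\{v_2(x,t):\ \mathrm{dist}(x,\mathbb{R}^N\setminus\Omega)>\varepsilon,\ t\in\mathbb{R}\}>0$. Then there is a constant $k>0$ such that $kv_2\ge v_1$ in $\Omega\times\mathbb{R}$.
   Context: $\partial_\nu v_2=\nu\cdot\nabla v_2$ denotes the outer normal derivative on $\partial\Omega$. *)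

(* Defs.v *)
From mathcomp Require Import ssreflect ssrfun ssrbool eqtype ssrnat seq fintype.
From Stdlib Require Import Reals.
Local Open Scope R_scope.

Definition pt (N : nat) := 'I_N -> R.

Definition vzero {N} : pt N := fun _ => 0.
Definition vsub {N} (x y : pt N) : pt N := fun i => x i - y i.
Definition vscale {N} (a : R) (x : pt N) : pt N := fun i => a * x i.

Definition dot {N} (x y : pt N) : R :=
  foldr (fun i acc => x i * y i + acc) 0 (enum 'I_N).
Definition norm {N} (x : pt N) : R := sqrt (dot x x).
Definition dist {N} (x y : pt N) : R := norm (vsub x y).

Definition dist2 {N} (x : pt N) (t : R) (y : pt N) (s : R) : R :=
  sqrt (dist x y ^ 2 + (t - s) ^ 2).

Definition is_open {N} (O : pt N -> Prop) : Prop :=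
  forall x, O x -> exists r, 0 < r /\ forall y, dist y x < r -> O y.

Definition connected {N} (O : pt N -> Prop) : Prop :=
  ~ exists A B : pt N -> Prop,
      is_open A /\ is_open B /\ (forall x, O x <-> (A x \/ B x)) /\
      (forall x, ~ (A x /\ B x)) /\ (exists x, A x) /\ (exists x, B x).

Definition domain {N} (O : pt N -> Prop) : Prop :=
  is_open O /\ connected O /\ exists x, O x.

Definition closure {N} (O : pt N -> Prop) (x : pt N) : Prop :=
  forall e, 0 < e -> exists y, O y /\ dist y x < e.

Definition boundary {N} (O : pt N -> Prop) (x : pt N) : Prop :=
  closure O x /\ ~ O x.

(* dist(x, R^N \ O) > e  (the infimum of the empty set being +infinity) *)
Definition dist_compl_gt {N} (O : pt N -> Prop) (x : pt N) (e : R) : Prop :=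
  exists eta, e < eta /\ forall y, ~ O y -> eta <= dist x y.

Definition has_grad {N} (f : pt N -> R) (x : pt N) (g : pt N) : Prop :=
  forall e, 0 < e -> exists d, 0 < d /\ forall y, dist y x < d ->
    Rabs (f y - f x - dot g (vsub y x)) <= e * dist y x.

Definition continuous_pt {N} (f : pt N -> R) (x : pt N) : Prop :=
  forall e, 0 < e -> exists d, 0 < d /\ forall y, dist y x < d ->
    Rabs (f y - f x) < e.

Definition proj_perp {N} (n z : pt N) : pt N := vsub z (vscale (dot z n) n).

(* Uniformly C^2 (uniformly smooth) domain: there are r > 0, M > 0 such that
   near every boundary point x0, within the ball B(x0, r), O is the region
   below the graph of a C^2 function phi over the tangent hyperplane (in the
   direction of a unit vector n), with phi(0) = 0, grad phi(0) = 0 and the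
   first and second derivatives of phi bounded by M. *)
Definition uniformly_smooth {N} (O : pt N -> Prop) : Prop :=
  exists r M, 0 < r /\ 0 < M /\
  forall x0, boundary O x0 ->
    exists (n : pt N) (phi : pt N -> R) (g : pt N -> pt N) (h : pt N -> 'I_N -> pt N),
      norm n = 1 /\
      (forall z, has_grad phi z (g z)) /\
      (forall z i, has_grad (fun w => g w i) z (h z i)) /\
      (forall z i j, continuous_pt (fun w => h w i j) z) /\
      (forall z, norm (g z) <= M) /\
      (forall z i j, Rabs (h z i j) <= M) /\
      phi vzero = 0 /\ (forall i, g vzero i = 0) /\
      (forall y, dist y x0 < r ->
         (O y <-> dot (vsub y x0) n < phi (proj_perp n (vsub y x0)))).

Definition outer_unit_normal {N} (O : pt N -> Prop) (x nu : pt N) : Prop :=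
  norm nu = 1 /\
  forall e, 0 < e -> exists d, 0 < d /\ forall y, 0 < dist y x < d ->
    (dot (vsub y x) nu > e * dist y x -> ~ closure O y) /\
    (dot (vsub y x) nu < - e * dist y x -> O y).

(* v in W^{1,oo}(O x R), represented by its (Lipschitz) continuous extension
   to closure(O) x R: bounded and Lipschitz on closure(O) x R. *)
Definition W1inf {N} (O : pt N -> Prop) (v : pt N -> R -> R) : Prop :=
  (exists B, forall x t, closure O x -> Rabs (v x t) <= B) /\
  (exists L, forall x t y s, closure O x -> closure O y ->
      Rabs (v x t - v y s) <= L * dist2 x t y s).

(* v in C^1(closure(O) x R) with spatial gradient G and time derivative D:
   v is differentiable in (x,t) on O x R with derivative (G, D), and
   v, G, D extend continuously to closure(O) x R. *)
Definition C1_closure {N} (O : pt N -> Prop) (v : pt N -> R -> R)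
    (G : pt N -> R -> pt N) (D : pt N -> R -> R) : Prop :=
  (forall x t, O x -> forall e, 0 < e -> exists d, 0 < d /\
     forall y s, dist2 y s x t < d ->
       Rabs (v y s - v x t - dot (G x t) (vsub y x) - D x t * (s - t))
         <= e * dist2 y s x t) /\
  (forall x t, closure O x -> forall e, 0 < e -> exists d, 0 < d /\
     forall y s, closure O y -> dist2 y s x t < d ->
       Rabs (v y s - v x t) < e /\ norm (vsub (G y s) (G x t)) < e /\
       Rabs (D y s - D x t) < e).

Definition unif_cont_closure {N} (O : pt N -> Prop) (G : pt N -> R -> pt N) : Prop :=
  forall e, 0 < e -> exists d, 0 < d /\
    forall x t y s, closure O x -> closure O y -> dist2 x t y s < d ->
      norm (vsub (G x t) (G y s)) < e.

(* Main.v *)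
Require Import Defs.
From mathcomp Require Import ssreflect ssrfun ssrbool eqtype ssrnat seq fintype.
From Stdlib Require Import Reals.
Open Scope R_scope.
From Stdlib Require Import Lra Psatz FunctionalExtensionality ClassicalEpsilon Classical.
Import Defs.
Open Scope R_scope.

Definition dotl {N} (s : seq 'I_N) (x y : pt N) : R :=
  foldr (fun i acc => x i * y i + acc) 0 s.

Lemma dot_dotl {N} (x y : pt N) : dot x y = dotl (enum 'I_N) x y.
Proof. reflexivity. Qed.

Lemma dotl_comm {N} s (x y : pt N) : dotl s x y = dotl s y x.
Proof. induction s as [|i s IH]; simpl; [lra|]. rewrite IH; ring. Qed.

Lemma dotl_comb {N} s (p q : pt N) a b c d :
  dotl s (fun i => a * p i + b * q i) (fun i => c * p i + d * q i) =
  a*c*dotl s p p + (a*d + b*c) * dotl s p q + b*d*dotl s q q.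
Proof.
  induction s as [|i s IH]; simpl; [ring|]. rewrite IH. ring.
Qed.

Lemma dotl_ext {N} s (x y x' y' : pt N) :
  (forall i, x i = x' i) -> (forall i, y i = y' i) -> dotl s x y = dotl s x' y'.
Proof. intros H1 H2. induction s as [|i s IH]; simpl; [lra|]. rewrite IH H1 H2. lra. Qed.

Lemma dotl_nonneg {N} s (x : pt N) : 0 <= dotl s x x.
Proof. induction s as [|i s IH]; simpl; nra. Qed.

Lemma dotl_coord {N} s (x : pt N) i : List.In i s -> (x i)^2 <= dotl s x x.
Proof.
  induction s as [|j s IH]; simpl; [tauto|].
  intros [->|H]; have := dotl_nonneg s x; [nra|]. have := IH H. nra.
Qed.

Lemma dotl_zero_l {N} s (x y : pt N) : (forall i, List.In i s -> x i = 0) -> dotl s x y = 0.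
Proof.
  induction s as [|j s IH]; simpl; [lra|]. intros H. rewrite H; [|auto]. rewrite IH; [lra|auto].
Qed.

Lemma dotl_eq0 {N} s (x : pt N) : dotl s x x = 0 -> forall i, List.In i s -> x i = 0.
Proof. intros H i Hi. have := dotl_coord s x i Hi. have := pow2_ge_0 (x i). nra. Qed.

Lemma dotl_CS {N} s (x y : pt N) : (dotl s x y)^2 <= dotl s x x * dotl s y y.
Proof.
  have Hx := dotl_nonneg s x. have Hy := dotl_nonneg s y.
  destruct (Req_dec (dotl s y y) 0) as [H0|H0].
  - rewrite (dotl_comm s x y) (dotl_zero_l s y x (dotl_eq0 s y H0)). nra.
  - set t := dotl s x y / dotl s y y.
    have := dotl_nonneg s (fun i => 1 * x i + (- t) * y i).
    rewrite dotl_comb.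
    have Hyy : 0 < dotl s y y by lra.
    intros H. 
    have E : t * dotl s y y = dotl s x y by unfold t; field; lra.
    nra.
Qed.

Lemma in_enum_all {N} (i : 'I_N) : List.In i (enum 'I_N).
Proof.
  have : i \in enum 'I_N by rewrite mem_enum.
  elim: (enum 'I_N) => [|j s IH] //=. rewrite in_cons => /orP [/eqP ->|H]; [left|right]; auto.
Qed.

Lemma norm_sq {N} (x : pt N) : norm x ^ 2 = dot x x.
Proof. unfold norm. rewrite /= Rmult_1_r sqrt_sqrt //. apply dotl_nonneg. Qed.

Lemma norm_nonneg {N} (x : pt N) : 0 <= norm x.
Proof. apply sqrt_pos. Qed.

Lemma dot_CS {N} (x y : pt N) : Rabs (dot x y) <= norm x * norm y.
Proof.
  have H := dotl_CS (enum 'I_N) x y. rewrite -!dot_dotl in H.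
  have := norm_nonneg x. have := norm_nonneg y.
  rewrite -(norm_sq x) -(norm_sq y) in H.
  intros Hy Hx. rewrite -(Rabs_pos_eq (norm x * norm y)); [|nra].
  apply Rsqr_le_abs_0. rewrite /Rsqr. nra.
Qed.

Lemma vec_eq {N} (x y : pt N) : (forall i, List.In i (enum 'I_N) -> x i = y i) -> x = y.
Proof. intros H. apply functional_extensionality => i. apply H, in_enum_all. Qed.

Lemma norm_eq0 {N} (x : pt N) : norm x = 0 -> x = vzero.
Proof.
  intros H. have H2 := norm_sq x. rewrite H dot_dotl in H2.
  apply vec_eq => i Hi. apply (dotl_eq0 (enum (ordinal N)) x); [|auto]. simpl in H2. lra.
Qed.

Lemma pdist_sym {N} (x y : pt N) : dist x y = dist y x.
Proof.
  unfold dist, norm. f_equal. rewrite !dot_dotl.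
  have -> : vsub x y = fun i => (-1) * vsub y x i + 0 * vsub y x i.
  { apply functional_extensionality => i. rewrite /vsub. ring. }
  rewrite dotl_comb. ring.
Qed.

Lemma norm_comb {N} (p q : pt N) a b :
  norm (fun i => a * p i + b * q i) = sqrt (a*a*dot p p + 2*a*b*dot p q + b*b*dot q q).
Proof. unfold norm. f_equal. rewrite !dot_dotl dotl_comb. ring. Qed.

Lemma norm_scale {N} (x : pt N) a : norm (fun i => a * x i) = Rabs a * norm x.
Proof.
  have -> : (fun i => a * x i) = (fun i => a * x i + 0 * x i).
  { apply functional_extensionality => i. ring. }
  rewrite norm_comb. unfold norm. rewrite -sqrt_Rsqr_abs -sqrt_mult.
  - f_equal. rewrite /Rsqr. ring.
  - apply Rle_0_sqr.
  - apply dotl_nonneg.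
Qed.

Lemma pdist_self {N} (x : pt N) : dist x x = 0.
Proof.
  unfold dist. have -> : vsub x x = (fun i => 0 * x i).
  { apply functional_extensionality => i. rewrite /vsub. ring. }
  rewrite norm_scale Rabs_R0. ring.
Qed.

Lemma pdist_nonneg {N} (x y : pt N) : 0 <= dist x y.
Proof. apply norm_nonneg. Qed.

Lemma dist2_same {N} (x y : pt N) t : dist2 x t y t = dist x y.
Proof.
  unfold dist2. rewrite Rminus_diag /= !Rmult_1_r Rmult_0_l Rplus_0_r.
  apply sqrt_square, pdist_nonneg.
Qed.


Lemma inv_small eps : 0 < eps -> exists K, forall n, (K <= n)%coq_nat -> / (INR n + 1) < eps.
Proof.
  intros He. destruct (INR_unbounded (/ eps)) as [K HK]. exists K. intros n Hn.
  have := le_INR _ _ Hn. intros H.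
  have Hp : 0 < INR n + 1 by have := pos_INR n; lra.
  have Hi : 0 < / eps by apply Rinv_0_lt_compat.
  rewrite -(Rinv_inv eps). apply Rinv_lt_contravar; [nra|lra].
Qed.

Lemma BW1 (u : nat -> R) K : (forall k, Rabs (u k) <= K) ->
  exists phi : nat -> nat, (forall k, (k <= phi k)%coq_nat) /\
    exists l, forall k, Rabs (u (phi k) - l) < / (INR k + 1).
Proof.
  intros HK.
  destruct (Bolzano_Weierstrass u (fun c => -K <= c <= K) (compact_P3 _ _)) as [l Hl].
  { intros n. have := HK n. intros H. have := Rle_abs (u n); have := Rle_abs (- u n); rewrite Rabs_Ropp; lra.
    }
  have H : forall k, exists p, (k <= p)%coq_nat /\ Rabs (u p - l) < / (INR k + 1).
  { intros k. have Hp : 0 < / (INR k + 1) by apply Rinv_0_lt_compat; have := pos_INR k; lra.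
    apply (Hl (fun z => Rabs (z - l) < / (INR k + 1)) k).
    exists (mkposreal _ Hp). intros z Hz. exact Hz. }
  exists (fun k => proj1_sig (constructive_indefinite_description _ (H k))).
  split.
  - intros k. exact (proj1 (proj2_sig (constructive_indefinite_description _ (H k)))).
  - exists l. intros k. exact (proj2 (proj2_sig (constructive_indefinite_description _ (H k)))).
Qed.

Lemma cv_sub (u : nat -> R) l (phi : nat -> nat) :
  Un_cv u l -> (forall k, (k <= phi k)%coq_nat) -> Un_cv (fun k => u (phi k)) l.
Proof.
  intros H Hp eps He. destruct (H eps He) as [K HK]. exists K. intros n Hn.
  apply HK. have := Hp n. unfold ge in *. lia.
Qed.

Lemma cv_rate (u : nat -> R) l : (forall k, Rabs (u k - l) < / (INR k + 1)) -> Un_cv u l.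
Proof.
  intros H eps He. destruct (inv_small eps He) as [K HK]. exists K. intros n Hn.
  unfold R_dist. have := H n. have := HK n Hn. lra.
Qed.



Lemma cv_inv : Un_cv (fun k => / (INR k + 1)) 0.
Proof.
  intros eps He. destruct (inv_small eps He) as [K HK]. exists K. intros n Hn.
  unfold R_dist. rewrite Rminus_0_r Rabs_pos_eq.
  - apply HK. exact Hn.
  - apply Rlt_le, Rinv_0_lt_compat. have := pos_INR n; lra.
Qed.

Lemma cv_const (c : R) : Un_cv (fun _ => c) c.
Proof. intros eps He. exists 0%nat. intros n _. unfold R_dist. rewrite Rminus_diag Rabs_R0. lra. Qed.

Lemma BWN {N} (s : seq 'I_N) (y : nat -> pt N) :
  (forall i, List.In i s -> exists K, forall k, Rabs (y k i) <= K) ->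
  exists phi : nat -> nat, (forall k, (k <= phi k)%coq_nat) /\
    exists l : pt N, forall i, List.In i s -> Un_cv (fun k => y (phi k) i) (l i).
Proof.
  revert y. induction s as [|j s IH]; intros y Hb.
  - exists (fun k => k). split; [intros; lia|]. exists vzero. intros i [].
  - destruct (IH y) as [phi1 [Hphi1 [l1 Hl1]]]. { intros i Hi. apply Hb. right. exact Hi. }
    destruct (Hb j (or_introl erefl)) as [K HK].
    destruct (BW1 (fun k => y (phi1 k) j) K (fun k => HK _)) as [phi2 [Hphi2 [lj Hlj]]].
    exists (fun k => phi1 (phi2 k)). split.
    + intros k. have := Hphi1 (phi2 k). have := Hphi2 k. lia.
    + exists (fun i => if i == j then lj else l1 i). intros i Hi.
      case: (eqVneq i j) => [->|Hne].
      * apply cv_rate. exact Hlj.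
      * destruct Hi as [Hi|Hi]. { rewrite Hi eqxx in Hne. discriminate. }
        apply (cv_sub (fun k => y (phi1 k) i)); [apply Hl1; exact Hi|exact Hphi2].
Qed.

Lemma cv_dotl {N} (s : seq 'I_N) (a b : nat -> pt N) (a0 b0 : pt N) :
  (forall i, List.In i s -> Un_cv (fun k => a k i) (a0 i)) ->
  (forall i, List.In i s -> Un_cv (fun k => b k i) (b0 i)) ->
  Un_cv (fun k => dotl s (a k) (b k)) (dotl s a0 b0).
Proof.
  induction s as [|j s IH]; intros Ha Hb; simpl.
  - apply cv_const.
  - apply CV_plus.
    + apply CV_mult; [apply Ha|apply Hb]; left; reflexivity.
    + apply IH; intros i Hi; [apply Ha|apply Hb]; right; exact Hi.
Qed.

Lemma coord_le_norm {N} (z : pt N) i : Rabs (z i) <= norm z.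
Proof.
  have H := dotl_coord (enum 'I_N) z i (in_enum_all i). rewrite -dot_dotl -norm_sq in H.
  have := norm_nonneg z. intros Hn.
  rewrite -(Rabs_pos_eq (norm z) Hn). apply Rsqr_le_abs_0. rewrite /Rsqr. simpl in H. lra.
Qed.

Lemma nearest {N} (O : pt N -> Prop) x : is_open O -> (exists y, ~ O y) ->
  exists x0, ~ O x0 /\ forall y, ~ O y -> dist x x0 <= dist x y.
Proof.
  intros Hop [y0 Hy0].
  set E := fun r => exists y, ~ O y /\ r = - dist x y.
  destruct (completeness E) as [m [Hub Hlub]].
  { exists 0. intros r [y [_ ->]]. have := pdist_nonneg x y. lra. }
  { exists (- dist x y0). exists y0. auto. }
  set rho := - m.
  have Hlow : forall y, ~ O y -> rho <= dist x y.
  { intros y Hy. have := Hub (- dist x y) (ex_intro _ y (conj Hy erefl)). unfold rho. lra. }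
  have Hrho : 0 <= rho. { have := Hlow y0 Hy0. have := Hub (- dist x y0) (ex_intro _ y0 (conj Hy0 erefl)).
    have : m <= 0. { apply Hlub. intros r [y [_ ->]]. have := pdist_nonneg x y. lra. } unfold rho. lra. }
  have Happ : forall k, exists y, ~ O y /\ dist x y < rho + / (INR k + 1).
  { intros k. apply NNPP. intros Hn.
    have Hp : 0 < / (INR k + 1) by apply Rinv_0_lt_compat; have := pos_INR k; lra.
    have : m <= - rho - / (INR k + 1).
    { apply Hlub. intros r [y [Hy ->]]. apply Rnot_lt_le. intros Hl. apply Hn. exists y. split; [auto|lra]. }
    unfold rho. lra. }
  set y := fun k => proj1_sig (constructive_indefinite_description _ (Happ k)).
  have Hy : forall k, ~ O (y k) /\ dist x (y k) < rho + / (INR k + 1).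
  { intros k. exact (proj2_sig (constructive_indefinite_description _ (Happ k))). }
  destruct (BWN (enum 'I_N) y) as [phi [Hphi [l Hl]]].
  { intros i _. exists (Rabs (x i) + rho + 1). intros k.
    have H1 := coord_le_norm (vsub x (y k)) i. rewrite /vsub in H1.
    have := proj2 (Hy k). have : / (INR k + 1) <= 1.
    { rewrite -Rinv_1. apply Rinv_le_contravar; [lra|]. have := pos_INR k; lra. }
    have := Rabs_triang (x i) (-(x i - y k i)). rewrite Rabs_Ropp.
    replace (x i + - (x i - y k i)) with (y k i) by ring. intros H2 H3 H4.
    unfold dist in H4. rewrite /vsub in H4. lra. }
  exists l. split.
  - intros Hol. destruct (Hop l Hol) as [r [Hr Hball]].
    have Hcv := cv_dotl (enum 'I_N) (fun k => vsub (y (phi k)) l) (fun k => vsub (y (phi k)) l)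
       (vsub l l) (vsub l l).
    have Hc : forall i, List.In i (enum 'I_N) -> Un_cv (fun k => vsub (y (phi k)) l i) (vsub l l i).
    { intros i Hi. rewrite /vsub. apply CV_minus; [apply Hl; exact Hi|apply cv_const]. }
    specialize (Hcv Hc Hc).
    rewrite (dotl_zero_l _ (vsub l l)) in Hcv; [|intros i _; rewrite /vsub; ring].
    have Hr2 : 0 < r * r by nra.
    destruct (Hcv _ Hr2) as [K HK]. specialize (HK K (le_n K)). unfold R_dist in HK.
    rewrite Rminus_0_r Rabs_pos_eq in HK; [|apply dotl_nonneg].
    apply (proj1 (Hy (phi K))). apply Hball. unfold dist, norm.
    rewrite -(sqrt_square r); [|lra]. apply sqrt_lt_1; [apply dotl_nonneg|nra|]. exact HK.
  - have Hcv := cv_dotl (enum 'I_N) (fun k => vsub x (y (phi k))) (fun k => vsub x (y (phi k)))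
       (vsub x l) (vsub x l).
    have Hc : forall i, List.In i (enum 'I_N) -> Un_cv (fun k => vsub x (y (phi k)) i) (vsub x l i).
    { intros i Hi. rewrite /vsub. apply CV_minus; [apply cv_const|apply Hl; exact Hi]. }
    specialize (Hcv Hc Hc).
    have Hv : Un_cv (fun k => (rho + / (INR k + 1)) * (rho + / (INR k + 1))) ((rho + 0) * (rho + 0)).
    { apply CV_mult; apply CV_plus; (apply cv_const || apply cv_inv). }
    have Hle := Rle_cv_lim (fun n => _) Hcv Hv.
    have Hd : dot (vsub x l) (vsub x l) <= rho * rho.
    { rewrite dot_dotl. replace (rho * rho) with ((rho + 0) * (rho + 0)) by ring. apply Hle.
      intros n. have := proj2 (Hy (phi n)). 
      have : / (INR (phi n) + 1) <= / (INR n + 1).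
      { apply Rinv_le_contravar; [have := pos_INR n; lra|]. have := le_INR _ _ (Hphi n). lra. }
      have H0 := norm_sq (vsub x (y (phi n))). rewrite dot_dotl in H0. simpl in H0.
      have := norm_nonneg (vsub x (y (phi n))). have : 0 < / (INR n + 1).
      { apply Rinv_0_lt_compat. have := pos_INR n; lra. }
      unfold dist. intros. nra. }
    intros z Hz. apply (Rle_trans _ rho); [|apply Hlow; exact Hz].
    unfold dist, norm. rewrite -(sqrt_square rho); [|lra]. apply sqrt_le_1; [apply dotl_nonneg|nra|exact Hd].
Qed.


Lemma norm_lt {N} (z : pt N) r : 0 <= r -> dot z z < r * r -> norm z < r.
Proof.
  intros Hr H. unfold norm. rewrite -(sqrt_square r); [|lra].
  apply sqrt_lt_1; [apply dotl_nonneg|nra|exact H].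
Qed.

Lemma norm_of_sq {N} (z : pt N) r : 0 <= r -> dot z z = r * r -> norm z = r.
Proof. intros Hr H. unfold norm. rewrite H. apply sqrt_square, Hr. Qed.

Lemma dot_comb {N} (p q : pt N) a b c d :
  dot (fun i => a * p i + b * q i) (fun i => c * p i + d * q i) =
  a*c*dot p p + (a*d + b*c) * dot p q + b*d*dot q q.
Proof. rewrite !dot_dotl. apply dotl_comb. Qed.

Lemma dot_sym {N} (p q : pt N) : dot p q = dot q p.
Proof. rewrite !dot_dotl. apply dotl_comm. Qed.

Lemma dot_comb_r {N} (p q : pt N) a b :
  dot (fun i => a * p i + b * q i) q = a * dot p q + b * dot q q.
Proof.
  have -> : dot (fun i => a * p i + b * q i) q = dot (fun i => a * p i + b * q i) (fun i => 0 * p i + 1 * q i).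
  { rewrite !dot_dotl. apply dotl_ext => i //. ring. }
  rewrite dot_comb. ring.
Qed.

Lemma as_comb {N} (p : pt N) : p = fun i => 1 * p i + 0 * p i.
Proof. apply functional_extensionality => i. ring. Qed.

Lemma as_comb2 {N} (q : pt N) (p : pt N) : q = fun i => 0 * p i + 1 * q i.
Proof. apply functional_extensionality => i. ring. Qed.

Lemma closure_of {N} (O : pt N -> Prop) y : O y -> closure O y.
Proof. intros H e He. exists y. rewrite pdist_self. auto. Qed.

Lemma normal_dir {N} (O : pt N -> Prop) x x0 nu :
  is_open O -> O x -> ~ O x0 -> (forall y, ~ O y -> dist x x0 <= dist x y) ->
  outer_unit_normal O x0 nu ->
  0 < dist x x0 /\ x = fun i => x0 i - dist x x0 * nu i.
Proof.
  intros Hop Hx Hx0 Hmin [Hnu1 Hnu].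
  set rho := dist x x0.
  have Hrho : 0 < rho.
  { destruct (Hop x Hx) as [r [Hr Hb]]. apply Rnot_le_lt. intros Hle.
    apply Hx0, Hb. rewrite pdist_sym. have := pdist_nonneg x x0. fold rho. lra. }
  split; [exact Hrho|].
  set dx := vsub x x0.
  have Hdx : dot dx dx = rho * rho.
  { have := norm_sq dx. rewrite /= Rmult_1_r. intros <-. reflexivity. }
  have Hnn : dot nu nu = 1. { have := norm_sq nu. rewrite Hnu1. simpl. lra. }
  set P := dot dx nu.
  set w := fun i => (1 / rho) * dx i + 1 * nu i.
  have HW : dot w w = 2 + 2 * P / rho.
  { rewrite /w dot_comb Hdx Hnn. fold P. field. lra. }
  have HW0 : dot w w = 0.
  { apply NNPP. intros HWn. have HWp : 0 < dot w w by have := dotl_nonneg (enum 'I_N) w; rewrite -dot_dotl; lra.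
    set a := sqrt (dot w w).
    have Ha : 0 < a by apply sqrt_lt_R0.
    have Ha2 : a * a = dot w w by apply sqrt_sqrt; lra.
    destruct (Hnu (a / 4)) as [d [Hd Hdd]]; [lra|].
    set s := Rmin (d / (2 * a)) (rho / 2).
    have Hs : 0 < s by apply Rmin_pos; apply Rdiv_lt_0_compat; lra.
    have Hs1 : s <= d / (2 * a) by apply Rmin_l.
    have Hs2 : s <= rho / 2 by apply Rmin_r.
    set y := fun i => x0 i + s * w i.
    have Eyx0 : vsub y x0 = fun i => (s / rho) * dx i + s * nu i.
    { apply functional_extensionality => i. rewrite /vsub /y /w. field. lra. }
    have Hdy : dist y x0 = s * a.
    { rewrite /dist Eyx0. apply norm_of_sq; [nra|]. rewrite dot_comb Hdx Hnn. replace (s*a*(s*a)) with (s*s*(a*a)) by ring. rewrite Ha2 HW. fold P. field. lra. }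
    have Hsa : s * a <= d / 2.
    { have : s * a <= d / (2 * a) * a by nra. have -> : d / (2*a) * a = d / 2 by field; lra. lra. }
    destruct (Hdd y) as [Hout _]. { rewrite Hdy. split; nra. }
    apply Hout.
    - rewrite Eyx0 dot_comb_r Hnn Hdy. fold P.
      have : (s / rho) * P + s * 1 = s * (a * a) / 2. { rewrite Ha2 HW. field. lra. }
      intros ->. nra.
    - apply closure_of. apply NNPP. intros Hy. have := Hmin y Hy. fold rho.
      rewrite (pdist_sym x y). unfold dist.
      have Eyx : vsub y x = fun i => (s / rho - 1) * dx i + s * nu i.
      { apply functional_extensionality => i. rewrite /vsub /y /w /dx /vsub. field. lra. }
      rewrite Eyx. apply Rlt_not_le. apply (norm_lt _ rho (Rlt_le _ _ Hrho)).
      rewrite dot_comb Hdx Hnn.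
      have EP : P = rho * (dot w w - 2) / 2. { rewrite HW. field. lra. }
      change (dot dx nu) with P. rewrite EP. 
      have : (s / rho - 1) * (s / rho - 1) * (rho * rho) + ((s / rho - 1) * s + s * (s / rho - 1)) * (rho * (dot w w - 2) / 2) + s * s * 1
             = s * s * dot w w - s * rho * dot w w + rho * rho by field; lra.
      intros ->. have H1 : 0 < s * dot w w by apply Rmult_lt_0_compat. nra. }
  apply vec_eq => i Hi. have := dotl_eq0 (enum (ordinal N)) w HW0 i Hi.
  rewrite /w /dx /vsub. intros H.
  have E : x i - x0 i = rho * (1/rho*(x i - x0 i)) by field; lra.
  have E2 : 1/rho*(x i - x0 i) = - nu i by lra.
  rewrite E2 in E. nra.
Qed.


Lemma segment_in {N} (O : pt N -> Prop) r x0 nu (n : pt N) (phi : pt N -> R) (g0 : pt N) :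
  0 < r -> norm n = 1 -> has_grad phi vzero g0 -> phi vzero = 0 -> (forall i, g0 i = 0) ->
  (forall y, dist y x0 < r -> (O y <-> dot (vsub y x0) n < phi (proj_perp n (vsub y x0)))) ->
  outer_unit_normal O x0 nu ->
  forall s, 0 < s < r -> O (fun i => x0 i - s * nu i).
Proof.
  intros Hr Hn1 Hg Hphi0 Hg0 Hch [Hnu1 Hnu].
  have Hnn : dot nu nu = 1. { have := norm_sq nu. rewrite Hnu1. simpl. lra. }
  have Hnn' : dot n n = 1. { have := norm_sq n. rewrite Hn1. simpl. lra. }
  set b := dot n nu.
  set w := fun i => 1 * n i + (-1) * nu i.
  have HW : dot w w = 2 - 2 * b. { rewrite /w dot_comb Hnn Hnn'. fold b. ring. }
  have HW0 : dot w w = 0.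
  { apply NNPP. intros HWn. have HWp : 0 < dot w w by have := dotl_nonneg (enum 'I_N) w; rewrite -dot_dotl; lra.
    set a := sqrt (dot w w).
    have Ha : 0 < a by apply sqrt_lt_R0.
    have Ha2 : a * a = dot w w by apply sqrt_sqrt; lra.
    destruct (Hnu (a / 4)) as [d1 [Hd1 Hdd1]]; [lra|].
    destruct (Hg (a / 4)) as [d2 [Hd2 Hdd2]]; [lra|].
    set m := Rmin (Rmin d1 d2) r.
    have Hm : 0 < m by apply Rmin_pos; [apply Rmin_pos|]; lra.
    have Hm1 : m <= d1 by unfold m; have := Rmin_l (Rmin d1 d2) r; have := Rmin_l d1 d2; lra.
    have Hm2 : m <= d2 by unfold m; have := Rmin_l (Rmin d1 d2) r; have := Rmin_r d1 d2; lra.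
    have Hm3 : m <= r by apply Rmin_r.
    set s := m / (2 * a).
    have Hs : 0 < s by apply Rdiv_lt_0_compat; lra.
    have Hsa : s * a = m / 2 by unfold s; field; lra.
    set y := fun i => x0 i + s * w i.
    have Eyx0 : vsub y x0 = fun i => (-s) * nu i + s * n i.
    { apply functional_extensionality => i. rewrite /vsub /y /w. ring. }
    have Hdy : dist y x0 = s * a.
    { rewrite /dist Eyx0. apply norm_of_sq; [nra|]. rewrite dot_comb Hnn Hnn'.
      replace (s*a*(s*a)) with (s*s*(a*a)) by ring. rewrite Ha2 HW (dot_sym nu n). fold b. ring. }
    have Hy : O y.
    { apply (proj2 (Hdd1 y ltac:(rewrite Hdy; lra))).
      rewrite Eyx0 Hdy.
      have -> : dot (fun i => - s * nu i + s * n i) nu = dot (fun i => s * n i + (- s) * nu i) nu.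
      { rewrite !dot_dotl. apply dotl_ext => i //. ring. }
      rewrite dot_comb_r Hnn. fold b.
      have : s * b + - s * 1 = - s * (a * a) / 2. { rewrite Ha2 HW. field. }
      intros ->. nra. }
    have Hc := proj1 (Hch y ltac:(rewrite Hdy; lra)) Hy.
    rewrite Eyx0 dot_comb_r Hnn' (dot_sym nu n) in Hc. fold b in Hc.
    set z := proj_perp n (fun i => - s * nu i + s * n i).
    fold z in Hc.
    have Ez : z = fun i => (-s) * nu i + (s * b) * n i.
    { apply functional_extensionality => i. rewrite /z /proj_perp /vsub /vscale dot_comb_r Hnn' (dot_sym nu n). fold b. ring. }
    have Hz2 : dot z z = s * s * (1 - b * b).
    { rewrite Ez dot_comb Hnn Hnn' (dot_sym nu n). fold b. ring. }
    have Hzv : vsub z vzero = z. { apply functional_extensionality => i. rewrite /vsub /vzero. ring. }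
    have Hnz : norm z <= s * a.
    { have Hle : norm z * norm z <= (s * a) * (s * a).
      { have := norm_sq z. rewrite /= Rmult_1_r. intros ->. rewrite Hz2.
        replace (s*a*(s*a)) with (s*s*(a*a)) by ring. rewrite Ha2 HW. have : 0 <= s*s*((1-b)*(1-b)) by apply Rmult_le_pos; nra. nra. }
      have := norm_nonneg z. nra. }
    have Hdz : dot g0 z = 0 := dotl_zero_l _ g0 z (fun i _ => Hg0 i).
    have := Hdd2 z. rewrite /dist Hzv Hphi0 Hdz.
    intros H. have H' := H ltac:(lra).
    have := Rle_abs (phi z - 0 - 0). rewrite HW in Ha2. intros.
    have : a / 4 * norm z <= a / 4 * (s * a) by apply Rmult_le_compat_l; lra.
    intros. nra. }
  have En : n = nu.
  { apply vec_eq => i Hi. have := dotl_eq0 (enum (ordinal N)) w HW0 i Hi. rewrite /w. lra. }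
  subst n.
  intros s [Hs1 Hs2].
  set y := fun i => x0 i - s * nu i.
  have Eyx0 : vsub y x0 = fun i => (-s) * nu i.
  { apply functional_extensionality => i. rewrite /vsub /y. ring. }
  have Hdy : dist y x0 = s.
  { rewrite /dist Eyx0 norm_scale Hnu1 Rabs_Ropp Rabs_pos_eq; lra. }
  apply (proj2 (Hch y ltac:(rewrite Hdy; lra))).
  rewrite Eyx0.
  have Ed : dot (fun i => - s * nu i) nu = - s.
  { have -> : dot (fun i => - s * nu i) nu = dot (fun i => - s * nu i + 0 * nu i) nu.
    { rewrite !dot_dotl. apply dotl_ext => i //. ring. }
    rewrite dot_comb_r Hnn. ring. }
  rewrite Ed.
  have -> : proj_perp nu (fun i => - s * nu i) = vzero.
  { apply functional_extensionality => i. rewrite /proj_perp /vsub /vscale /vzero Ed. ring. }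
  rewrite Hphi0. lra.
Qed.


Definition ptn {N} (x0 nu : pt N) (s : R) : pt N := fun i => x0 i - s * nu i.

Lemma ptn_dist {N} (x0 nu : pt N) s s' : norm nu = 1 -> dist (ptn x0 nu s') (ptn x0 nu s) = Rabs (s' - s).
Proof.
  intros H. rewrite /dist. have -> : vsub (ptn x0 nu s') (ptn x0 nu s) = fun i => (-(s' - s)) * nu i.
  { apply functional_extensionality => i. rewrite /vsub /ptn. ring. }
  rewrite norm_scale H Rabs_Ropp. ring.
Qed.

Lemma ptn_dist0 {N} (x0 nu : pt N) s : norm nu = 1 -> dist (ptn x0 nu s) x0 = Rabs s.
Proof.
  intros H. rewrite /dist. have -> : vsub (ptn x0 nu s) x0 = fun i => (- s) * nu i.
  { apply functional_extensionality => i. rewrite /vsub /ptn. ring. }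
  rewrite norm_scale H Rabs_Ropp. ring.
Qed.

Lemma dot_scale_l {N} (p q : pt N) a : dot (fun i => a * p i) q = a * dot p q.
Proof. rewrite !dot_dotl. elim: (enum 'I_N) => [|j l IH] /=; [ring|]. rewrite IH. ring. Qed.

Lemma deriv_f {N} (O : pt N -> Prop) v2 G D x0 nu t s :
  C1_closure O v2 G D -> norm nu = 1 -> O (ptn x0 nu s) ->
  derivable_pt_lim (fun s => v2 (ptn x0 nu s) t) s (- dot (G (ptn x0 nu s) t) nu).
Proof.
  intros [HC1 _] Hn Hin eps He.
  destruct (HC1 _ t Hin (eps / 2) ltac:(lra)) as [d [Hd Hdd]].
  exists (mkposreal d Hd). intros h Hh0 Hh. simpl in Hh.
  have E1 : ptn x0 nu (s + h) = ptn x0 nu (s + h) by reflexivity.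
  have H := Hdd (ptn x0 nu (s + h)) t.
  rewrite dist2_same ptn_dist // in H.
  replace (s + h - s) with h in H by ring.
  specialize (H Hh).
  have Ev : vsub (ptn x0 nu (s + h)) (ptn x0 nu s) = fun i => (- h) * nu i.
  { apply functional_extensionality => i. rewrite /vsub /ptn. ring. }
  rewrite Ev (dot_sym (G _ t)) dot_scale_l Rminus_diag Rmult_0_r Rminus_0_r in H.
  rewrite (dot_sym nu) in H.
  set l := dot (G (ptn x0 nu s) t) nu. fold l in H.
  have Hha : 0 < Rabs h by apply Rabs_pos_lt.
  replace ((v2 (ptn x0 nu (s + h)) t - v2 (ptn x0 nu s) t) / h - - l) with
    ((v2 (ptn x0 nu (s + h)) t - v2 (ptn x0 nu s) t - (- h * l)) / h) by (field; exact Hh0).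
  rewrite /Rdiv Rabs_mult Rabs_inv.
  apply (Rmult_lt_reg_r (Rabs h)); [exact Hha|]. rewrite Rmult_assoc Rinv_l; [|lra].
  nra.
Qed.

Lemma normal_est {N} (O : pt N -> Prop) v2 G D x0 nu t R0 K :
  C1_closure O v2 G D -> norm nu = 1 -> closure O x0 -> 0 < R0 -> 0 <= K ->
  (forall s, 0 < s < R0 -> O (ptn x0 nu s)) ->
  (forall s, 0 < s < R0 -> Rabs (dot (G (ptn x0 nu s) t) nu - dot (G x0 t) nu) <= K) ->
  forall b, 0 < b < R0 ->
    Rabs (v2 (ptn x0 nu b) t - v2 x0 t + dot (G x0 t) nu * b) <= K * b.
Proof.
  intros HC Hn Hx0 HR0 HK Hin Hgr.
  set f := fun s => v2 (ptn x0 nu s) t.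
  set gg := dot (G x0 t) nu.
  have Hmvt : forall a b, 0 < a < b -> b < R0 -> Rabs (f b - f a + gg * (b - a)) <= K * (b - a).
  { intros a b Hab HbR.
    destruct (MVT_cor2 f (fun s => - dot (G (ptn x0 nu s) t) nu) a b (proj2 Hab)) as [c [Ec Hc]].
    { intros c Hc. apply (deriv_f O v2 G D); auto. apply Hin. lra. }
    rewrite Ec.
    replace (- dot (G (ptn x0 nu c) t) nu * (b - a) + gg * (b - a)) with
      (- ((dot (G (ptn x0 nu c) t) nu - gg) * (b - a))) by ring.
    rewrite Rabs_Ropp Rabs_mult (Rabs_pos_eq (b - a)); [|lra].
    apply Rmult_le_compat_r; [lra|]. apply Hgr. lra. }
  intros b Hb. apply Rnot_lt_le. intros Hlt.
  set eta := Rabs (f b - v2 x0 t + gg * b) - K * b.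
  have Heta : 0 < eta by unfold eta; exact (Rlt_Rminus _ _ Hlt).
  destruct (proj2 HC x0 t Hx0 (eta / 2) ltac:(lra)) as [d [Hd Hdd]].
  set a := Rmin (Rmin d b / 2) (eta / (4 * (Rabs gg + K + 1))).
  have Hq : 0 < 4 * (Rabs gg + K + 1) by have := Rabs_pos gg; lra.
  have Ha : 0 < a. { apply Rmin_pos; [|apply Rdiv_lt_0_compat; lra]. have := Rmin_pos d b Hd (proj1 Hb). lra. }
  have Ha1 : a <= Rmin d b / 2 by apply Rmin_l.
  have Ha2 : a <= eta / (4 * (Rabs gg + K + 1)) by apply Rmin_r.
  have Had : a < d by have := Rmin_l d b; lra.
  have Hab : a < b by have := Rmin_r d b; lra.
  have H1 := Hmvt a b (conj Ha Hab) (proj2 Hb).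
  have Hda : dist2 (ptn x0 nu a) t x0 t < d.
  { rewrite dist2_same (ptn_dist0 x0 nu a Hn) Rabs_pos_eq; lra. }
  have HaR : 0 < a < R0 by split; lra.
  have H2 := proj1 (Hdd (ptn x0 nu a) t (closure_of _ _ (Hin a HaR)) Hda).
  have H3 : (Rabs gg + K + 1) * a <= eta / 4.
  { have := Rmult_le_compat_l (Rabs gg + K + 1) _ _ ltac:(have := Rabs_pos gg; lra) Ha2.
    have -> : (Rabs gg + K + 1) * (eta / (4 * (Rabs gg + K + 1))) = eta / 4.
    { field. have := Rabs_pos gg; lra. }
    auto. }
  have H4 : Rabs (gg * a) = Rabs gg * a by rewrite Rabs_mult (Rabs_pos_eq a); lra.
  have := Rabs_triang (f b - f a + gg * (b - a)) (f a - v2 x0 t + gg * a).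
  replace (f b - f a + gg * (b - a) + (f a - v2 x0 t + gg * a)) with (f b - v2 x0 t + gg * b) by ring.
  have := Rabs_triang (f a - v2 x0 t) (gg * a). rewrite H4.
  unfold eta in *. fold f in H2. 
  have : 0 <= Rabs gg * a by have := Rabs_pos gg; nra.
  change (v2 (ptn x0 nu a) t) with (f a) in H2. have : 0 <= K * a by apply Rmult_le_pos; lra. intros. lra.
Qed.


Lemma dot_sub_l {N} (p q w : pt N) : dot (vsub p q) w = dot p w - dot q w.
Proof. rewrite !dot_dotl. elim: (enum 'I_N) => [|j l IH] /=; [ring|]. rewrite IH /vsub. ring. Qed.

Lemma v2_pos {N} (O : pt N -> Prop) (v2 : pt N -> R -> R) y t :
  is_open O ->
  (forall e, 0 < e -> exists c, 0 < c /\ forall x t, dist_compl_gt O x e -> c <= v2 x t) ->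
  O y -> 0 < v2 y t.
Proof.
  intros Hop Hinf Hy. destruct (Hop y Hy) as [r [Hr Hb]].
  destruct (Hinf (r / 2) ltac:(lra)) as [c [Hc Hcv]].
  apply (Rlt_le_trans _ c); [exact Hc|]. apply Hcv. exists r. split; [lra|].
  intros z Hz. apply Rnot_lt_le. intros Hl. apply Hz, Hb. rewrite pdist_sym. exact Hl.
Qed.

Lemma closure_toward {N} (O : pt N -> Prop) x x0 :
  O x -> (forall y, ~ O y -> dist x x0 <= dist x y) -> 0 < dist x x0 -> closure O x0.
Proof.
  intros Hx Hmin Hrho e He.
  set rho := dist x x0.
  have Hr : 0 < rho := Hrho.
  set s := Rmin 1 (e / (2 * rho)).
  have Hs : 0 < s by apply Rmin_pos; [lra|apply Rdiv_lt_0_compat; lra].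
  have Hs1 : s <= 1 by apply Rmin_l.
  have Hs2 : s <= e / (2 * rho) by apply Rmin_r.
  set y := fun i => x0 i + s * (x i - x0 i).
  exists y. split.
  - apply NNPP. intros Hy. have := Hmin y Hy. fold rho. rewrite pdist_sym /dist.
    have -> : vsub y x = fun i => (- (1 - s)) * vsub x x0 i.
    { apply functional_extensionality => i. rewrite /vsub /y. ring. }
    rewrite norm_scale Rabs_Ropp. fold (dist x x0). fold rho.
    destruct (Rle_lt_or_eq_dec _ _ Hs1) as [Hl|He1].
    + rewrite Rabs_pos_eq; [|lra]. nra.
    +
      intros _. apply Hy.
      have -> : y = x. { apply functional_extensionality => i. rewrite /y He1. ring. }
      exact Hx.
  - rewrite /dist. have -> : vsub y x0 = fun i => s * vsub x x0 i.
    { apply functional_extensionality => i. rewrite /vsub /y. ring. }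
    rewrite norm_scale Rabs_pos_eq; [|lra]. fold (dist x x0). fold rho.
    have : s * rho <= e / (2 * rho) * rho by apply Rmult_le_compat_r; lra.
    have -> : e / (2 * rho) * rho = e / 2 by field; lra. lra.
Qed.

Lemma div_nonneg a b : 0 <= a -> 0 < b -> 0 <= a / b.
Proof. intros Ha Hb. apply Rmult_le_pos; [exact Ha|]. left. apply Rinv_0_lt_compat, Hb. Qed.

Theorem mainTheorem13 (N : nat) (Omega : pt N -> Prop) (nu : pt N -> pt N)
    (v1 v2 : pt N -> R -> R) (G : pt N -> R -> pt N) (D : pt N -> R -> R) :
  domain Omega ->
  uniformly_smooth Omega ->
  (forall x, boundary Omega x -> outer_unit_normal Omega x (nu x)) ->
  W1inf Omega v1 ->
  C1_closure Omega v2 G D ->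
  (forall x t, boundary Omega x -> v1 x t <= v2 x t) ->
  unif_cont_closure Omega G ->
  (exists c, 0 < c /\ forall x t, boundary Omega x ->
      v1 x t - v2 x t + Rmin (dot (nu x) (G x t)) 0 <= - c) ->
  (forall e, 0 < e -> exists c, 0 < c /\
      forall x t, dist_compl_gt Omega x e -> c <= v2 x t) ->
  exists k, 0 < k /\ forall x t, Omega x -> v1 x t <= k * v2 x t.
Proof.
  intros [Hop _] [r [M [Hr [HM Hchart]]]] Hnu [[B HB] [L HL]] HC Hbd HG [c [Hc Hcond]] Hinf.
  destruct (HG (c / 2) ltac:(lra)) as [dG [HdG HGu]].
  set R0 := Rmin dG r.
  have HR0 : 0 < R0 by apply Rmin_pos.
  have HR0r : R0 <= r by apply Rmin_r.
  have HR0G : R0 <= dG by apply Rmin_l.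
  set sg := R0 / 2.
  have HaL : 0 < Rabs L + 1 by have := Rabs_pos L; lra.
  set eps := Rmin (sg / 2) (Rmin (1 / 4) (c / (8 * (Rabs L + 1)))).
  have Heps : 0 < eps.
  { apply Rmin_pos; [unfold sg; lra|]. apply Rmin_pos; [lra|]. apply Rdiv_lt_0_compat; lra. }
  have He1 : eps <= sg / 2 by apply Rmin_l.
  have He2 : eps <= 1 / 4 by unfold eps; have := Rmin_r (sg / 2) (Rmin (1 / 4) (c / (8 * (Rabs L + 1)))); have := Rmin_l (1 / 4) (c / (8 * (Rabs L + 1))); lra.
  have He3 : eps <= c / (8 * (Rabs L + 1)) by unfold eps; have := Rmin_r (sg / 2) (Rmin (1 / 4) (c / (8 * (Rabs L + 1)))); have := Rmin_r (1 / 4) (c / (8 * (Rabs L + 1))); lra.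
  have HLe : Rabs L * eps <= c / 8.
  { have : (Rabs L + 1) * eps <= (Rabs L + 1) * (c / (8 * (Rabs L + 1))) by apply Rmult_le_compat_l; lra.
    have -> : (Rabs L + 1) * (c / (8 * (Rabs L + 1))) = c / 8 by field; lra. lra. }
  destruct (Hinf eps Heps) as [ce [Hce Hcev]].
  set k := 2 + 4 * Rabs L / c + Rabs B / ce.
  have HkL : 4 * Rabs L / c >= 0. { apply Rle_ge, div_nonneg; [have := Rabs_pos L; lra|lra]. }
  have HkB : Rabs B / ce >= 0. { apply Rle_ge, div_nonneg; [have := Rabs_pos B; lra|lra]. }
  have HkLc : k * c / 4 >= Rabs L.
  { have : 4 * Rabs L / c * c / 4 = Rabs L by field; lra.
    have : (2 + Rabs B / ce) * c / 4 >= 0 by apply Rle_ge, div_nonneg; [apply Rmult_le_pos|]; lra.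
    unfold k. intros. 
    have -> : (2 + 4 * Rabs L / c + Rabs B / ce) * c / 4 = (2 + Rabs B / ce) * c / 4 + 4 * Rabs L / c * c / 4 by field; lra.
    lra. }
  exists k. split; [unfold k; lra|].
  intros x t Hx.
  have Hpos : forall y, Omega y -> 0 < v2 y t by intros y Hy; apply (v2_pos Omega v2 y t Hop Hinf Hy).
  have Hv2x := Hpos x Hx.
  have Hfar : dist_compl_gt Omega x eps -> v1 x t <= k * v2 x t.
  { intros Hd. have Hce' := Hcev x t Hd.
    have HBx := HB x t (closure_of _ _ Hx).
    have := Rle_abs (v1 x t).
    have : Rabs B / ce * v2 x t >= Rabs B / ce * ce.
    { apply Rle_ge, Rmult_le_compat_l; [lra|exact Hce']. }
    have -> : Rabs B / ce * ce = Rabs B by field; lra.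
    have := Rle_abs B.
    have : (2 + 4 * Rabs L / c) * v2 x t >= 0 by apply Rle_ge, Rmult_le_pos; lra.
    unfold k. intros. nra. }
  destruct (classic (exists y, ~ Omega y)) as [Hne|Hnone].
  2: { apply Hfar. exists (eps + 1). split; [lra|]. intros y Hy. exfalso. apply Hnone. exists y. exact Hy. }
  destruct (nearest Omega x Hop Hne) as [x0 [Hx0n Hmin]].
  set rho := dist x x0.
  destruct (Rle_lt_dec rho eps) as [Hre|Hre].
  2: { apply Hfar. exists rho. split; [exact Hre|]. exact Hmin. }
  have Hrho0 : 0 < rho.
  { destruct (Hop x Hx) as [r' [Hr' Hb]]. apply Rnot_le_lt. intros Hle.
    apply Hx0n, Hb. rewrite pdist_sym. have := pdist_nonneg x x0. fold rho. lra. }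
  have Hcl0 : closure Omega x0 := closure_toward Omega x x0 Hx Hmin Hrho0.
  have Hbd0 : boundary Omega x0 := conj Hcl0 Hx0n.
  have Hnu0 := Hnu x0 Hbd0.
  set n0 := nu x0. fold n0 in Hnu0.
  have Hn1 : norm n0 = 1 := proj1 Hnu0.
  destruct (normal_dir Omega x x0 n0 Hop Hx Hx0n Hmin Hnu0) as [_ Hxeq].
  fold rho in Hxeq.
  destruct (Hchart x0 Hbd0) as [n [phi [g [h [Hn [Hgr [_ [_ [_ [_ [Hphi0 [Hg0 Hch]]]]]]]]]]]].
  have Hin : forall s, 0 < s < r -> Omega (ptn x0 n0 s).
  { intros s Hs. apply (segment_in Omega r x0 n0 n phi (g vzero) Hr Hn (Hgr vzero) Hphi0 Hg0 Hch Hnu0 s Hs). }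
  have Hgb : forall s, 0 < s < R0 -> Rabs (dot (G (ptn x0 n0 s) t) n0 - dot (G x0 t) n0) <= c / 2.
  { intros s Hs. rewrite -dot_sub_l.
    apply (Rle_trans _ _ _ (dot_CS _ _)). rewrite Hn1 Rmult_1_r. apply Rlt_le.
    apply HGu; [apply closure_of, Hin; lra|exact Hcl0|].
    rewrite dist2_same ptn_dist0 // Rabs_pos_eq; lra. }
  have Hest := normal_est Omega v2 G D x0 n0 t R0 (c / 2) HC Hn1 Hcl0 HR0 ltac:(lra)
     (fun s Hs => Hin s ltac:(lra)) Hgb.
  set gg := dot (G x0 t) n0. fold gg in Hest.
  set f0 := v2 x0 t. fold f0 in Hest.
  have Hsg : 0 < sg < R0 by unfold sg; lra.
  have Hfs := Hest sg Hsg.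
  have Hfspos := Hpos _ (Hin sg ltac:(lra)).
  have Hfr := Hest rho ltac:(lra).
  have Exp : ptn x0 n0 rho = x by rewrite Hxeq.
  rewrite Exp in Hfr.
  have Hf0 : 0 <= f0.
  { apply Rnot_lt_le. intros Hf0.
    have Hq : 0 < 2 * (Rabs gg + c + 1) by have := Rabs_pos gg; lra.
    set b := Rmin sg (- f0 / (2 * (Rabs gg + c + 1))).
    have Hb : 0 < b by apply Rmin_pos; [lra|apply Rdiv_lt_0_compat; lra].
    have Hb1 : b <= sg by apply Rmin_l.
    have Hb2 : b <= - f0 / (2 * (Rabs gg + c + 1)) by apply Rmin_r.
    have Hfb := Hest b ltac:(lra).
    have Hfbpos := Hpos _ (Hin b ltac:(lra)).
    have : (Rabs gg + c + 1) * b <= (Rabs gg + c + 1) * (- f0 / (2 * (Rabs gg + c + 1))).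
    { apply Rmult_le_compat_l; [have := Rabs_pos gg; lra|exact Hb2]. }
    have -> : (Rabs gg + c + 1) * (- f0 / (2 * (Rabs gg + c + 1))) = - f0 / 2 by field; lra.
    intros Hm.
    have Ha1 := Rle_abs (v2 (ptn x0 n0 b) t - f0 + gg * b).
    have Ha2 := Rle_abs (- gg). rewrite Rabs_Ropp in Ha2.
    have Ha3 : Rabs gg * b >= - gg * b by apply Rle_ge, Rmult_le_compat_r; lra.
    have Ha4 : c / 2 * b <= c * b by nra.
    lra. }
  have HLip : v1 x t <= v1 x0 t + Rabs L * rho.
  { have H := HL x t x0 t (closure_of _ _ Hx) Hcl0. rewrite dist2_same in H. fold rho in H.
    have := Rle_abs (v1 x t - v1 x0 t). have : L * rho <= Rabs L * rho by apply Rmult_le_compat_r; [lra|apply Rle_abs].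
    lra. }
  have HLr : Rabs L * rho <= c / 8.
  { have : Rabs L * rho <= Rabs L * eps by apply Rmult_le_compat_l; [apply Rabs_pos|lra]. lra. }
  have Hc0 := Hcond x0 t Hbd0. fold n0 f0 in Hc0. rewrite (dot_sym n0) in Hc0. fold gg in Hc0.
  have Hb0 := Hbd x0 t Hbd0. fold f0 in Hb0.
  have Hfr1 := Rle_abs (v2 x t - f0 + gg * rho).
  have Hfr2 := Rle_abs (- (v2 x t - f0 + gg * rho)). rewrite Rabs_Ropp in Hfr2.
  have Hfs2 := Rle_abs (- (v2 (ptn x0 n0 sg) t - f0 + gg * sg)). rewrite Rabs_Ropp in Hfs2.
  have Hfs1 := Rle_abs (v2 (ptn x0 n0 sg) t - f0 + gg * sg).
  destruct (Rle_lt_dec 0 gg) as [Hg|Hg].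
  - rewrite Rmin_right in Hc0; [|lra].
    have Hgs : gg * sg < f0 + c / 2 * sg by lra.
    have Hgrr : sg * (gg * rho) <= sg * (f0 / 2 + rho * (c / 2)).
    { have : rho * (gg * sg) <= rho * (f0 + c / 2 * sg) by apply Rmult_le_compat_l; lra.
      have : rho * f0 <= sg / 2 * f0 by apply Rmult_le_compat_r; lra.
      intros. nra. }
    have Hgr' : gg * rho <= f0 / 2 + rho * (c / 2) by apply (Rmult_le_reg_l sg); [lra|exact Hgrr].
    have : k * v2 x t >= 2 * v2 x t by apply Rle_ge, Rmult_le_compat_r; unfold k; lra.
    nra.
  - rewrite Rmin_left in Hc0; [|lra].
    destruct (Rle_lt_dec gg (- (3 * c / 4))) as [Hg2|Hg2].
    + have H0 : gg * rho <= - (3 * c / 4) * rho by apply Rmult_le_compat_r; lra.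
      have H1 : v2 x t >= f0 + c * rho / 4 by lra.
      have Hk2 : 2 <= k by unfold k; lra.
      have H2 : k * v2 x t >= k * (f0 + c * rho / 4) by apply Rle_ge, Rmult_le_compat_l; lra.
      have H3 : k * f0 >= f0 by nra.
      have H4 : (k * c / 4) * rho >= Rabs L * rho by apply Rle_ge, Rmult_le_compat_r; lra.
      lra.
    + have H0 : gg * rho <= 0 by nra.
      have Hcr : c * rho <= c * (1/4) by apply Rmult_le_compat_l; lra.
      have H1 : v2 x t >= f0 - c / 8 by lra.
      have Hk2 : 2 <= k by unfold k; lra.
      have : k * v2 x t >= v2 x t by nra.
      lra.
Qed.
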